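(* Let $G$ be a finite abelian group, let $\rho\in[2,\operatorname{diam}^+(G)]$, and let $A$ be a $\rho$-maximal subset of $G$. Then $\pi(A)=\pi(\langle A\rangle^+_\tau)$ for every $\tau\in[1,\rho-1]$.
   Context: Groups are written additively. For $A\subseteq G$ let $A_0:=A\cup\{0\}$ and $\langle A\rangle^+_\tau:=\tau A_0=\{a_1+\dots+a_\tau:a_i\in A_0\}$. $\operatorname{diam}^+_A(G):=\min\{\rho\in\mathbb{N}_0:\langle A\rangle^+_\rho=G\}$ ($\min\varnothing=\infty$); $\operatorname{diam}^+(G):=\max\{\operatorname{diam}^+_A(G):\langle A\rangle=G\}$. The period of $S\subseteq G$ is $\pi(S):=\{g\in G:S+g=S\}$. A subset $A\subseteq G$ is $\rho$-maximal if it is maximal under inclusion subject to $\operatorname{diam}^+_A(G)\ge\rho$, i.e. subject to $\langle A\rangle^+_{\rho-1}\neq G$. *)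

(* Defs.v *)
From HB Require Import structures.
From mathcomp Require Import all_boot all_order all_algebra.
From Stdlib Require Import ClassicalDescription.
Set Implicit Arguments. Unset Strict Implicit. Unset Printing Implicit Defensive.
Import GRing.Theory.
Local Open Scope ring_scope.

Section Defs.
Variable G : finZmodType.

Definition sumset (A B : {set G}) : {set G} := [set a + b | a in A, b in B].

Definition A0 (A : {set G}) : {set G} := A :|: [set 0].

Definition hsum (tau : nat) (A : {set G}) : {set G} :=
  iter tau (sumset (A0 A)) [set 0].

Definition zspan (A : {set G}) : {set G} :=
  \bigcap_(B : {set G} | [&& A \subset B, 0 \in B &
            [forall x in B, forall y in B, x - y \in B]]) B.

(* Extended naturals: None = infinity. *)
Definition ext_le (r : nat) (d : option nat) : bool :=
  if d is Some n then (r <= n)%N else true.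

Definition emax (d e : option nat) : option nat :=
  match d, e with
  | Some m, Some n => Some (maxn m n)
  | _, _ => None
  end.

Definition diamA (A : {set G}) : option nat :=
  match excluded_middle_informative (exists r, hsum r A == setT) with
  | left H => Some (ex_minn H)
  | right _ => None
  end.

Definition diam_plus : option nat :=
  \big[emax/Some 0%N]_(A : {set G} | zspan A == setT) diamA A.

Definition period (S : {set G}) : {set G} :=
  [set g | [set x + g | x in S] == S].

Definition rho_maximal (rho : nat) (A : {set G}) : bool :=
  maxset (fun B : {set G} => ext_le rho (diamA B)) A.

End Defs.

(* Main.v *)
Require Import Defs.
From HB Require Import structures.
From mathcomp Require Import all_boot all_order all_algebra.
From Stdlib Require Import ClassicalDescription.
Set Implicit Arguments. Unset Strict Implicit. Unset Printing Implicit Defensive.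
Import GRing.Theory.
Local Open Scope ring_scope.

Section Aux.
Variable G : finZmodType.
Implicit Types A B C S : {set G}.

Lemma sumsetP C S x :
  reflect (exists2 c, c \in C & exists2 s, s \in S & x = c + s) (x \in sumset C S).
Proof.
apply: (iffP imset2P).
  by case=> c s Hc Hs ->; exists c => //; exists s.
by case=> c Hc [s Hs ->]; exists c s.
Qed.

Lemma mem_sumset C S c s : c \in C -> s \in S -> c + s \in sumset C S.
Proof. by move=> Hc Hs; apply/sumsetP; exists c => //; exists s. Qed.

Lemma periodP S g : reflect {in S, forall x, x + g \in S} (g \in period S).
Proof.
rewrite inE; apply: (iffP eqP).
  by move=> E x Hx; rewrite -E; apply: imset_f.
move=> Hs; apply/eqP; rewrite eqEcard; apply/andP; split.
  by apply/subsetP => y /imsetP [x Hx ->]; apply: Hs.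
by rewrite card_imset // => x y /addIr.
Qed.

Lemma zero_A0 A : 0 \in A0 A.
Proof. by rewrite !inE eqxx orbT. Qed.

Lemma hsum_step n A : hsum n A \subset hsum n.+1 A.
Proof.
apply/subsetP => x Hx; rewrite /hsum iterS.
by rewrite -[x]add0r; apply: mem_sumset => //; apply: zero_A0.
Qed.

Lemma hsum_mono m n A : (m <= n)%N -> hsum m A \subset hsum n A.
Proof.
move=> /subnKC <-; elim: (n - m)%N => [|k IH]; first by rewrite addn0.
by rewrite addnS; apply: subset_trans IH (hsum_step _ _).
Qed.

Lemma period_sumsetr C S g : g \in period S -> g \in period (sumset C S).
Proof.
move/periodP=> Hg; apply/periodP => x /sumsetP [c Hc [s Hs ->]].
by rewrite -addrA; apply: mem_sumset => //; apply: Hg.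
Qed.

Lemma period_sumsetl C S g : g \in period C -> g \in period (sumset C S).
Proof.
move/periodP=> Hg; apply/periodP => x /sumsetP [c Hc [s Hs ->]].
by rewrite addrAC; apply: mem_sumset => //; apply: Hg.
Qed.

Lemma period_hsum t k A g : g \in period (hsum t A) -> g \in period (hsum (k + t) A).
Proof.
elim: k => [//|k IH] Hg; rewrite addSn /hsum iterS.
by apply: period_sumsetr; apply: IH.
Qed.

Lemma period0 S : 0 \in period S.
Proof. by apply/periodP => x; rewrite addr0. Qed.

Lemma periodD S g h : g \in period S -> h \in period S -> g + h \in period S.
Proof.
move=> /periodP Hg /periodP Hh; apply/periodP => x Hx.
by rewrite addrA; apply: Hh; apply: Hg.
Qed.

Lemma hsum_trans (A B H : {set G}) (n : nat) :
  0 \in H -> (forall g h, g \in H -> h \in H -> g + h \in H) ->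
  A0 B \subset sumset (A0 A) H ->
  hsum n B \subset sumset (hsum n A) H.
Proof.
move=> H0 HD sB; elim: n => [|n IH].
  apply/subsetP => x; rewrite /hsum /= inE => /eqP ->.
  have := mem_sumset (set11 (0:G)) H0; by rewrite addr0.
apply/subsetP => x; rewrite /hsum !iterS => /sumsetP [b Hb [y Hy ->]].
move/subsetP: sB => /(_ _ Hb) /sumsetP [a Ha [h1 Hh1 ->]].
move/subsetP: IH => /(_ _ Hy) /sumsetP [t Ht [h2 Hh2 ->]].
have -> : a + h1 + (t + h2) = (a + t) + (h1 + h2) by rewrite addrACA.

by apply: mem_sumset; [apply: mem_sumset | apply: HD].
Qed.

Lemma ext_diam rho B : (1 <= rho)%N ->
  ext_le rho (diamA B) = (hsum rho.-1 B != setT).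
Proof.
move=> r1; rewrite /diamA; case: excluded_middle_informative => [Ex|NEx] /=.
  case: ex_minnP => m Hm Hmin.
  apply/idP/idP => [Hr|].
    apply/negP => /Hmin; rewrite leqNgt; move/negP; apply.
    by rewrite prednK // -(prednK r1) in Hr *; rewrite ltnS; case: rho Hr r1.
  apply: contraR; rewrite -ltnNge => Hlt; rewrite eqEsubset subsetT /=.
  move/eqP: Hm => <-; apply: hsum_mono.
  by rewrite -ltnS prednK.
apply/esym/negP => E; apply: NEx; by exists rho.-1.
Qed.

End Aux.

Theorem lemma5p1 (G : finZmodType) (rho : nat) (A : {set G}) :
  (2 <= rho)%N -> ext_le rho (diam_plus G) ->
  rho_maximal rho A ->
  forall tau : nat, (1 <= tau <= rho.-1)%N ->
  period A = period (hsum tau A).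
Proof.
move=> r2 _ /maxsetP [PA Hmax] tau /andP [t1 tr].
have r1 : (1 <= rho)%N by apply: leq_trans r2.
rewrite ext_diam // in PA.
set S := hsum rho.-1 A in PA.
set H := period S.
set B := sumset (A0 A) H.
have AB : A \subset B.
  apply/subsetP => a Ha; rewrite -[a]addr0; apply: mem_sumset.
    by rewrite inE Ha.
  by apply: period0.
have PB : ext_le rho (diamA B).
  rewrite ext_diam //; apply: contra PA => /eqP E.
  rewrite eqEsubset subsetT /= -E.
  apply: subset_trans (@hsum_trans _ A B H _ _ _ _) _.
  - exact: period0.
  - by move=> g h; apply: periodD.
  - apply/subsetP => x; rewrite /A0 in_setU in_set1 => /orP [//| /eqP ->].
    by move: (mem_sumset (zero_A0 A) (period0 S)); rewrite addr0.
  apply/subsetP => x /sumsetP [t Ht [h Hh ->]].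
  by move/periodP: Hh; apply.
have BA := Hmax B PB AB.
have A0A : A0 A = A.
  apply/setUidPl; apply/subsetP => x; rewrite inE => /eqP ->.
  rewrite -BA -[0]addr0; apply: mem_sumset; [apply: zero_A0 | apply: period0].
have HA : forall g, g \in H -> g \in period A.
  move=> g Hg; apply/periodP => a Ha; rewrite -BA; apply: mem_sumset => //.
  by rewrite inE Ha.
apply/setP => g; apply/idP/idP => Hg.
  rewrite -(prednK t1) /hsum iterS -/(hsum _ A) A0A.
  exact: period_sumsetl.
apply: HA; rewrite /H /S -(subnK tr); exact: period_hsum.
Qed.
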